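(* Let $I\subseteq\mathbb{R}$ be an interval, let $h:J\to\mathbb{R}$ be a positive function on an interval $J\supseteq(0,1)$, let $f\in SX(h,I)$, let $a,b\in I$ with $a<b$, and let $f\in L_{1}[a,b]$. Then for every $\alpha>0$, $$\frac{1}{\alpha h\left(\frac{1}{2}\right)}f\left(\frac{a+b}{2}\right)\leq\frac{\Gamma(\alpha)}{(b-a)^{\alpha}}\left[J_{a^{+}}^{\alpha}f(b)+J_{b^{-}}^{\alpha}f(a)\right]\leq\left[f(a)+f(b)\right]\int_{0}^{1}t^{\alpha-1}\left[h(t)+h(1-t)\right]dt.$$
   Context: Given a positive function $h:J\to\mathbb{R}$, a function $f:I\to\mathbb{R}$ belongs to the class $SX(h,I)$ ($h$-convex functions) if $f$ is nonnegative and $f(\lambda x+(1-\lambda)y)\leq h(\lambda)f(x)+h(1-\lambda)f(y)$ for all $x,y\in I$ and $\lambda\in(0,1)$. For $f\in L_1[a,b]$ and $\alpha>0$, the Riemann–Liouville fractional integrals are $J_{a^{+}}^{\alpha}f(x)=\frac{1}{\Gamma(\alpha)}\int_a^x (x-t)^{\alpha-1}f(t)\,dt$ for $x>a$ and $J_{b^{-}}^{\alpha}f(x)=\frac{1}{\Gamma(\alpha)}\int_x^b (t-x)^{\alpha-1}f(t)\,dt$ for $x<b$, where $\Gamma(\alpha)=\int_0^\infty e^{-u}u^{\alpha-1}\,du$. *)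

(* Defs.v *)
From HB Require Import structures.
From mathcomp Require Import all_boot all_order all_algebra.
From mathcomp Require Import all_classical all_reals all_analysis.
Set Implicit Arguments. Unset Strict Implicit. Unset Printing Implicit Defensive.
Import Order.TTheory GRing.Theory Num.Theory.
Import numFieldNormedType.Exports.
Local Open Scope classical_set_scope.
Local Open Scope ring_scope.

Definition SX {R : realType} (h : R -> R) (I : set R) (f : R -> R) : Prop :=
  (forall x, I x -> 0 <= f x) /\
  (forall x y l, I x -> I y -> 0 < l < 1 ->
     f (l * x + (1 - l) * y) <= h l * f x + h (1 - l) * f y).

Definition Gamma {R : realType} (alpha : R) : R :=
  fine (\int[@lebesgue_measure R]_(u in `]0%R, +oo[)
          (expR (- u) * u `^ (alpha - 1))%:E)%E.

(* Riemann-Liouville fractional integrals (values in \bar R; integrands are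
   nonnegative in our use, so the value is always meaningful) *)
Definition RL_left {R : realType} (alpha a : R) (f : R -> R) (x : R) : \bar R :=
  ((Gamma alpha)^-1)%:E *
  (\int[@lebesgue_measure R]_(t in `]a, x[) ((x - t) `^ (alpha - 1) * f t)%:E)%E.

Definition RL_right {R : realType} (alpha b : R) (f : R -> R) (x : R) : \bar R :=
  ((Gamma alpha)^-1)%:E *
  (\int[@lebesgue_measure R]_(t in `]x, b[) ((t - x) `^ (alpha - 1) * f t)%:E)%E.

(* Main.v *)
Require Import Defs.
From HB Require Import structures.
From mathcomp Require Import all_boot all_order all_algebra.
From mathcomp Require Import all_classical all_reals all_analysis.
Import Order.TTheory GRing.Theory Num.Theory.
Import numFieldNormedType.Exports.
Local Open Scope classical_set_scope.
Local Open Scope ring_scope.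
From mathcomp Require Import measurable_realfun.
From mathcomp Require Import ring lra.

Section S.
Context {R : realType}.
Local Notation mu := (@lebesgue_measure R).



Lemma lower_le (D : set R) (f1 f2 : R -> \bar R) :
  (forall x, D x -> (0 <= f1 x)%E) -> (forall x, D x -> (f1 x <= f2 x)%E) ->
  (\int[mu]_(x in D) f1 x <= \int[mu]_(x in D) f2 x)%E.
Proof.
move=> f10 f12.
have f20 : forall x, D x -> (0 <= f2 x)%E by move=> x Dx; exact: le_trans (f10 x Dx) (f12 x Dx).
rewrite !ge0_integralE//.
apply: ereal_sup_le => _ [g /= gf <-]; exists g => //= x.
apply: le_trans (gf x) _.
rewrite /patch; case: ifPn => // /set_mem; exact: f12.
Qed.



Lemma affine_int (c d : R) (c0 : 0 < c) (D : set R) (g : R -> \bar R) :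
  measurable D -> measurable_fun [set: R] g -> (forall x, (0 <= g x)%E) ->
  (\int[mu]_(x in D) g x =
  c%:E * \int[mu]_(t in (fun t => c * t + d)%R @^-1` D) g (c * t + d)%R)%E.
Proof.
move=> mD mg g0.
set phi := fun t : R => (c * t + d).
have mphi : measurable_fun setT phi.
  by apply: measurable_funD => //; apply: measurable_funM => //.
refine (let pm : measure (measurableTypeR R) R := pushforward mu (phi : _ -> measurableTypeR R) in _).
have E A : measurable A -> mu A = mscale (NngNum (ltW c0)) pm A.
  move=> mA.
  apply: (@lebesgue_measure_unique R (mscale (NngNum (ltW c0)) pm)) => // _ [[x y] _ <-].
  change (mu `]x, y]%classic = (c%:E * mu (phi @^-1` `]x, y]%classic))%E).
  have -> : phi @^-1` `]x, y]%classic = `]((x - d) / c), ((y - d) / c)]%classic.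
    apply/seteqP; split => t /=; rewrite !in_itv /= /phi.
      by move=> /andP[xt ty]; rewrite ltr_pdivrMr // ler_pdivlMr // ltrBlDr lerBrDr [t * c]mulrC xt ty.
    by rewrite ltr_pdivrMr // ler_pdivlMr // ltrBlDr lerBrDr [t * c]mulrC.
  rewrite !lebesgue_measure_itv /= !lte_fin ltr_pM2r ?invr_gt0 // ltrBlDr subrK.
  case: ifPn => // xy; last by rewrite mule0.
  by rewrite -EFinD -EFinM; congr EFin; field; exact: lt0r_neq0.
rewrite (eq_measure_integral (mscale (NngNum (ltW c0)) pm)); last first.
  by move=> A mA _; exact: E.
rewrite ge0_integral_mscale //; last exact: measurable_funTS.
rewrite ge0_integral_pushforward //; exact: measurable_funTS.
Unshelve. all: exact: mphi.
Qed.



Lemma powR_cont (r x : R) : 0 < x -> {for x, continuous (@powR R ^~ r)}.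
Proof.
move=> x0; apply/differentiable_continuous; rewrite -derivable1_diffP.
by apply: derivable_powR; rewrite in_itv /= andbT.
Qed.

Lemma int_pow_seg (al e : R) : 0 < al -> 0 < e < 1 ->
  (\int[mu]_(x in `[e, 1%R]) (x `^ (al - 1))%:E = ((1 - e `^ al) / al)%:E)%E.
Proof.
move=> al0 /andP[e0 e1].
have F'E (x : R) : 0 < x -> is_derive x 1 (fun y => al^-1 * y `^ al) (x `^ (al - 1)).
  move=> x0.
  have := @is_deriveZ R R R (@powR R ^~ al) al^-1 x 1 _ (is_derive1_powR al x0).
  by rewrite /GRing.scale /= mulrA mulVf ?gt_eqF // mul1r.
rewrite (@continuous_FTC2 _ _ (fun y => al^-1 * y `^ al)) //.
- rewrite powR1 mulr1 -EFinB; congr EFin; lra.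
- apply: continuous_in_subspaceT => x; rewrite inE /= in_itv /= => /andP[ex _].
  exact: powR_cont (lt_le_trans e0 ex).
- split.
  + move=> x; rewrite in_itv /= => /andP[ex _].
    by have [] := F'E x (lt_trans e0 ex).
  + apply: cvg_at_right_filter.
    have [+ _] := F'E e e0 => /derivable1_diffP/differentiable_continuous; exact.
  + apply: cvg_at_left_filter.
    have [+ _] := F'E 1 ltr01 => /derivable1_diffP/differentiable_continuous; exact.
- move=> x; rewrite in_itv /= => /andP[ex _].
  rewrite derive1E.
  by have [_ ->] := F'E x (lt_trans e0 ex).
Qed.

Lemma int_pow01 (al : R) : 0 < al ->
  (\int[mu]_(x in `]0%R, 1%R[) (x `^ (al - 1))%:E = (al^-1)%:E)%E.
Proof.
move=> al0.
have mf : measurable_fun [set: R] (fun x : R => (x `^ (al - 1))%:E).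
  by apply: measurableT_comp => //; exact: measurable_powR.
pose u n : R := (n.+2%:R)^-1.
have u0 n : 0 < u n by rewrite invr_gt0.
have u1 n : u n < 1 by rewrite invf_lt1 // ltr1n.
pose e n : R := u n `^ al^-1.
have eal n : e n `^ al = u n by rewrite -powRrM mulVf ?gt_eqF // powRr1 // ltW.
have e0 n : 0 < e n by apply: powR_gt0.
have e1 n : e n < 1.
  have := @gt0_ltr_powR R al^-1 (ltac:(by rewrite invr_gt0)) (u n) 1.
  rewrite powR1 /e; apply; rewrite ?nnegrE ?ltW //.
pose F n := `[e n, 1%R]%classic.
have ndF : nondecreasing_seq F.
  apply/nondecreasing_seqP => n; rewrite subsetEset => x; rewrite /F /= !in_itv /= => /andP[ex ->].
  rewrite andbT (le_trans _ ex) // /e ge0_ler_powR ?invr_ge0 ?ltW // ?nnegrE ?ltW //.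
  by rewrite /u ltf_pV2 ?posrE ?ltr0n // ltr_nat.
have UF : \bigcup_n F n = `]0%R, 1%R]%classic.
  apply/seteqP; split => x /=.
    by move=> [n _]; rewrite /F /= !in_itv /= => /andP[ex ->]; rewrite (lt_le_trans (e0 n) ex).
  rewrite in_itv /= => /andP[x0 x1].
  exists (Num.truncn ((x `^ al)^-1)) => //; rewrite /F /= in_itv /= x1 andbT.
  rewrite [leRHS](_ : x = (x `^ al) `^ al^-1); last first.
    by rewrite -powRrM divff ?powRr1 ?ltW // lt0r_neq0.
  rewrite /e; apply: ge0_ler_powR; rewrite ?invr_ge0 ?nnegrE ?powR_ge0 ?ltW //.
  rewrite /u -[ltRHS]invrK ltf_pV2 ?posrE ?ltr0n ?invr_gt0 ?powR_gt0 //.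
  by rewrite (lt_le_trans (truncnS_gt _)) // ler_nat.
have IF n : (\int[mu]_(x in F n) (x `^ (al - 1))%:E = ((1 - u n) / al)%:E)%E.
  by rewrite int_pow_seg // ?e0 ?e1 // eal.
have := @ge0_nondecreasing_set_cvg_integral _ (measurableTypeR R) R F (fun x : R => (x `^ (al - 1))%:E) mu ndF.
rewrite UF => /(_ (fun i => measurable_itv _) (fun i => measurable_funTS mf)).
move=> /(_ (fun i x _ => powR_ge0 _ _)) H.
rewrite integral_itv_bndo_bndc; last exact: measurable_funTS.
have H2 : ((\int[mu]_(x in F i) (x `^ (al - 1))%:E)%E @[i --> \oo] --> (al^-1)%:E).
  under eq_fun do rewrite IF.
  apply: cvg_EFin; first exact: nearW.
  have H3 : (fun n => (1 - u n) / al) @ \oo --> (1 - 0) / al.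
    apply: cvgMr_tmp; apply: cvgB; first exact: cvg_cst.
    have := @cvg_harmonic R; rewrite -cvg_shiftS; exact.
  by rewrite subr0 mul1r in H3; exact: H3.
exact: (cvg_unique _ H H2).
Qed.
Lemma pow_exp_bound (al u : R) : 0 < al -> 1 <= u ->
  u `^ (al - 1) <= expR (al * ln (2 * al) - al) * expR (u / 2).
Proof.
move=> al0 u1.
have u0 : 0 < u by apply: lt_le_trans u1.
apply: (@le_trans _ _ (u `^ al)); first by apply: ler_powR => //; lra.
rewrite /powR gt_eqF // -expRD ler_expR.
have H : ln (u / (2 * al)) <= u / (2 * al) - 1.
  have := @le_ln1Dx R (u / (2 * al) - 1).
  rewrite [1 + _]addrC subrK; apply; have : 0 < u / (2 * al) by rewrite divr_gt0 //; lra.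
  lra.
rewrite lnM ?posrE ?invr_gt0 ?mulr_gt0 // lnV ?posrE ?mulr_gt0 // in H.
have E : al * (u / (2 * al)) = u / 2 by field; exact: lt0r_neq0.
nra.
Qed.

Lemma Gamma_gt0 (al : R) : 0 < al -> 0 < Gamma al.
Proof.
move=> al0.
set G := fun u : R => (expR (- u) * u `^ (al - 1))%:E.
have mG : measurable_fun [set: R] G.
  apply: measurableT_comp => //; apply: measurable_funM.
    by apply: measurableT_comp => //; exact: measurable_expR.
  exact: measurable_powR.
have G0 x : (0 <= G x)%E by rewrite lee_fin mulr_ge0 ?powR_ge0 // ltW // expR_gt0.
rewrite /Gamma -/G.
have -> : `]0%R, +oo[%classic = `]0%R, 1%R[%classic `|` (`[1%R, +oo[%classic : set R).
  apply/seteqP; split => x /=; rewrite !in_itv /= ?andbT.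
    by move=> x0; case: (ltP x 1) => x1; [left; rewrite x0|right].
  by move=> [/andP[]|/(lt_le_trans ltr01)].
rewrite ge0_integral_setU //; last 3 first.
- exact: measurable_funTS.
- by move=> *; apply: G0.
- apply/disj_setPS => x [] /=; rewrite !in_itv /= andbT => /andP[_ x1] x1'.
  by move: (lt_le_trans x1 x1'); rewrite ltxx.
set I1 := (\int[mu]_(x in _) _)%E.
set I2 := (\int[mu]_(x in _) _)%E.
have mp : measurable_fun [set: R] (fun x : R => (x `^ (al - 1))%:E).
  by apply: measurableT_comp => //; exact: measurable_powR.
have I1le : (I1 <= (al^-1)%:E)%E.
  rewrite -(int_pow01 _ al0); apply: ge0_le_integral => //.
  - by move=> x _; exact: G0.
  - exact: measurable_funTS.
  - exact: measurable_funTS.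
  - move=> x; rewrite /= in_itv /= => /andP[x0 x1]; rewrite lee_fin ler_piMl ?powR_ge0 //.
    by rewrite -expR0 ler_expR; lra.
have I1ge : ((expR (-1) / al)%:E <= I1)%E.
  rewrite EFinM -(int_pow01 _ al0) -ge0_integralZl_EFin; last 4 first.
  - exact: measurable_itv.
  - by move=> x _; rewrite lee_fin powR_ge0.
  - exact: measurable_funTS.
  - exact/ltW/expR_gt0.
  apply: ge0_le_integral => //.
  - by move=> x _; rewrite lee_fin mulr_ge0 ?powR_ge0 // ltW // expR_gt0.
  - by apply: measurable_funTS; under eq_fun do rewrite -EFinM; apply: measurableT_comp => //; apply: measurable_funM => //; exact: measurable_powR.
  - exact: measurable_funTS.
  - move=> x; rewrite /= in_itv /= => /andP[x0 x1]; rewrite -EFinM lee_fin ler_wpM2r ?powR_ge0 //.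
    by rewrite ler_expR; lra.
set K := expR (al * ln (2 * al) - al).
have I2le : (I2 <= (2 * K)%:E)%E.
  have r0 : (0 : R) <= 2^-1 by rewrite invr_ge0.
  have mpdf : measurable_fun [set: R] (fun x => ((2 * K) * exponential_pdf 2^-1 x)%:E).
    by apply: measurableT_comp => //; apply: measurable_funM => //; exact: measurable_exponential_pdf.
  apply: (@le_trans _ _ (\int[mu]_(x in `[1%R, +oo[) ((2 * K) * exponential_pdf 2^-1 x)%:E)%E).
    apply: ge0_le_integral => //.
    - by move=> x _; exact: G0.
    - exact: measurable_funTS.
    - exact: measurable_funTS.
    - move=> x; rewrite /= in_itv /= andbT => x1.
      rewrite exponential_pdfE; last by apply: le_trans x1.
      rewrite lee_fin.
      have := pow_exp_bound al x al0 x1; rewrite -/K => Hb.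
      have E : expR (- x) * expR (x / 2) = expR (- 2^-1 * x).
        by rewrite -expRD; congr expR; field.
      rewrite -E.
      have ex : 0 < expR (- x) by apply: expR_gt0.
      have ex2 : 0 < expR (x / 2) by apply: expR_gt0.
      have K0 : 0 < K by apply: expR_gt0.
      nra.
  apply: (@le_trans _ _ (\int[mu]_(x in [set: R]) ((2 * K) * exponential_pdf 2^-1 x)%:E)%E).
    apply: ge0_subset_integral => //.
    by move=> x _; rewrite lee_fin mulr_ge0 ?exponential_pdf_ge0 // mulr_ge0 // ltW // expR_gt0.
  under eq_integral do rewrite EFinM.
  rewrite ge0_integralZl_EFin //; last 3 first.
  - by move=> x _; rewrite lee_fin exponential_pdf_ge0.
  - by apply: measurableT_comp => //; exact: measurable_exponential_pdf.
  - by rewrite mulr_ge0 // ltW // expR_gt0.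
  by rewrite integral_exponential_pdf ?invr_gt0 // mule1.
have I2ge : (0 <= I2)%E by apply: integral_ge0 => x _; exact: G0.
have I1f : I1 \is a fin_num.
  by rewrite ge0_fin_numE ?(le_lt_trans I1le) ?ltry // (le_trans _ I1ge) // lee_fin divr_ge0 // ltW // expR_gt0.
have I2f : I2 \is a fin_num by rewrite ge0_fin_numE ?(le_lt_trans I2le) ?ltry.
rewrite fineD // (@lt_le_trans _ _ (fine I1)) //.
  rewrite -lte_fin fineK // (lt_le_trans _ I1ge) // lte_fin divr_gt0 // expR_gt0.
by rewrite lerDl fine_ge0.
Qed.
Lemma neg_int (D : set R) (g : R -> \bar R) :
  measurable D -> measurable_fun [set: R] g -> (forall x, (0 <= g x)%E) ->
  (\int[mu]_(x in D) g x = \int[mu]_(x in (-%R) @^-1` D) g (- x)%R)%E.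
Proof.
move=> mD mg g0.
transitivity (\int[pushforward mu (-%R : _ -> measurableTypeR R)]_(x in D) g x)%E.
  by apply: eq_measure_integral => A mA _; exact/esym/lebesgue_measureN.
rewrite ge0_integral_pushforward //=; last exact: measurable_funTS.
Qed.

Lemma le_scale_lower (D : set R) (p q : R -> \bar R) (k : R) :
  measurable D -> measurable_fun D p -> 0 <= k ->
  (forall x, D x -> (0 <= p x)%E) ->
  (forall x, D x -> (p x <= k%:E * q x)%E) ->
  (forall x, D x -> (0 <= q x)%E) ->
  (\int[mu]_(x in D) p x <= k%:E * \int[mu]_(x in D) q x)%E.
Proof.
move=> mD mp k0 p0 pq q0.
have [kz|kpos] := eqVneq k 0.
  rewrite kz in pq *.
  rewrite mul0e -(integral0 mu D); apply: lower_le => // x Dx.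
  by have := pq x Dx; rewrite mul0e.
have kp : 0 < k by rewrite lt_neqAle eq_sym kpos.
rewrite -lee_pdivrMl // -ge0_integralZl_EFin //; last by rewrite invr_ge0.
apply: lower_le => x Dx; first by rewrite mule_ge0 ?p0 // lee_fin invr_ge0 ltW.
by rewrite lee_pdivrMl //; exact: pq.
Qed.
End S.

Local Notation lmu R := (@lebesgue_measure R).

Theorem theorem9 (R : realType) (I J : set R) (h f : R -> R) (a b : R) :
  is_interval I -> is_interval J -> `]0, 1[ `<=` J ->
  (forall x, J x -> 0 < h x) ->
  SX h I f ->
  I a -> I b -> a < b ->
  (@lebesgue_measure R).-integrable `[a, b] (EFin \o f) ->
  forall alpha : R, 0 < alpha ->
    (((alpha * h (2^-1))^-1 * f ((a + b) / 2))%:E <=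
       (Gamma alpha / (b - a) `^ alpha)%:E *
         (RL_left alpha a f b + RL_right alpha b f a))%E /\
    ((Gamma alpha / (b - a) `^ alpha)%:E *
         (RL_left alpha a f b + RL_right alpha b f a) <=
       (f a + f b)%:E *
         \int[@lebesgue_measure R]_(t in `]0%R, 1%R[)
            (t `^ (alpha - 1) * (h t + h (1 - t)))%:E)%E.
Proof.
move=> hI hJ sJ hpos [f0 hconv] Ia Ib ab /integrableP[/measurable_EFinP mf _] al al0.
set c := b - a.
have cE : c = b - a by [].
have c0 : 0 < c by rewrite subr_gt0.
have inI x : a <= x <= b -> I x by move=> H; exact: (hI a b Ia Ib).
set F := f \_ `[a, b].
have mF : measurable_fun [set: R] F := (measurable_restrictT f (measurable_itv `[a, b])).1 mf.
have F0 x : 0 <= F x.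
  rewrite /F patchE; case: ifPn => // /set_mem H; apply: f0; apply: inI.
  by move: H; rewrite /= in_itv.
have Fab x : a < x < b -> F x = f x.
  move=> /andP[ax xb]; rewrite /F patchE ifT //; apply/mem_set.
  by rewrite /= in_itv /= !ltW.
have mpow : measurable_fun [set: R] (fun t : R => t `^ (al - 1)).
  exact: measurable_powR.
have IL : (\int[lmu R]_(t in `]a, b[) ((b - t) `^ (al - 1) * f t)%R%:E =
    (c `^ al)%:E * \int[lmu R]_(t in `]0%R, 1%R[) (t `^ (al - 1) * F (b - c * t))%R%:E)%E.
  under eq_integral => t tin.
    rewrite -Fab; last by move: tin; rewrite inE /= in_itv.
    over.
  have mgL : measurable_fun [set: R] (fun t : R => ((b - t) `^ (al - 1) * F t)%:E).
    apply: measurableT_comp => //; apply: measurable_funM => //.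
    apply: (measurableT_comp mpow); exact: measurable_funB.
  have gL0 t : (0 <= ((b - t) `^ (al - 1) * F t)%:E)%E.
    by rewrite lee_fin mulr_ge0 ?powR_ge0.
  rewrite [LHS]neg_int //.
  have -> : ((-%R) @^-1` `]a, b[%classic) = `](- b), (- a)[%classic.
    apply/seteqP; split => t /=; rewrite !in_itv /=.
      by move=> /andP[h1 h2]; apply/andP; split; lra.
    by move=> /andP[h1 h2]; apply/andP; split; lra.
  rewrite [LHS](@affine_int _ c (- b) c0); last 3 first.
  - exact: measurable_itv.
  - by apply: (measurableT_comp mgL); exact: measurable_funN.
  - by move=> x; exact: gL0.
  have -> : ((fun t : R => c * t + - b) @^-1` `](- b), (- a)[%classic) = `]0%R, 1%R[%classic.
    apply/seteqP; split => t /=; rewrite !in_itv /=.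
      by move=> /andP[h1 h2]; apply/andP; split; nra.
    by move=> /andP[h1 h2]; apply/andP; split; nra.
  rewrite (eq_integral (fun t : measurableTypeR R => (c `^ (al - 1))%:E * (t `^ (al - 1) * F (b - c * t))%:E)%E); last first.
    move=> t; rewrite inE /= in_itv /= => /andP[t0 t1].
    rewrite -EFinM mulrA -powRM ?ltW //; congr EFin; congr (_ `^ _ * F _); ring.
  rewrite ge0_integralZl_EFin //; last 3 first.
  - by move=> t _; rewrite lee_fin mulr_ge0 ?powR_ge0.
  - apply: measurable_funTS; apply: measurableT_comp => //; apply: measurable_funM => //.
    apply: measurableT_comp => //; apply: measurable_funB => //; exact: measurable_funM.
  - exact: powR_ge0.
  by rewrite muleA -EFinM mulr_powRB1 // ltW.
have IR : (\int[lmu R]_(t in `]a, b[) ((t - a) `^ (al - 1) * f t)%R%:E =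
    (c `^ al)%:E * \int[lmu R]_(t in `]0%R, 1%R[) (t `^ (al - 1) * F (c * t + a))%R%:E)%E.
  under eq_integral => t tin.
    rewrite -Fab; last by move: tin; rewrite inE /= in_itv.
    over.
  have mgR : measurable_fun [set: R] (fun t : R => ((t - a) `^ (al - 1) * F t)%:E).
    apply: measurableT_comp => //; apply: measurable_funM => //.
    apply: (measurableT_comp mpow); exact: measurable_funB.
  have gR0 t : (0 <= ((t - a) `^ (al - 1) * F t)%:E)%E.
    by rewrite lee_fin mulr_ge0 ?powR_ge0.
  rewrite [LHS](@affine_int _ c a c0); last 3 first.
  - exact: measurable_itv.
  - exact: mgR.
  - by move=> x; exact: gR0.
  have -> : ((fun t : R => c * t + a) @^-1` `]a, b[%classic) = `]0%R, 1%R[%classic.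
    apply/seteqP; split => t /=; rewrite !in_itv /=.
      by move=> /andP[h1 h2]; apply/andP; split; nra.
    by move=> /andP[h1 h2]; apply/andP; split; nra.
  rewrite (eq_integral (fun t : measurableTypeR R => (c `^ (al - 1))%:E * (t `^ (al - 1) * F (c * t + a))%:E)%E); last first.
    move=> t; rewrite inE /= in_itv /= => /andP[t0 t1].
    rewrite -EFinM mulrA -powRM ?ltW //; congr EFin; congr (_ `^ _ * F _); ring.
  rewrite ge0_integralZl_EFin //; last 3 first.
  - by move=> t _; rewrite lee_fin mulr_ge0 ?powR_ge0.
  - apply: measurable_funTS; apply: measurableT_comp => //; apply: measurable_funM => //.
    apply: measurableT_comp => //; apply: measurable_funD => //; exact: measurable_funM.
  - exact: powR_ge0.
  by rewrite muleA -EFinM mulr_powRB1 // ltW.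
rewrite /RL_left /RL_right IL IR.
set JL := (\int[lmu R]_(t in `]0%R, 1%R[) _)%E.
set JR := (\int[lmu R]_(t in `]0%R, 1%R[) _)%E.
have mP : measurable_fun [set: R] (fun t : R => (t `^ (al - 1) * F (b - c * t))%:E).
  apply: measurableT_comp => //; apply: measurable_funM => //.
  apply: measurableT_comp => //; apply: measurable_funB => //; exact: measurable_funM.
have mQ : measurable_fun [set: R] (fun t : R => (t `^ (al - 1) * F (c * t + a))%:E).
  apply: measurableT_comp => //; apply: measurable_funM => //.
  apply: measurableT_comp => //; apply: measurable_funD => //; exact: measurable_funM.
have JL0 : (0 <= JL)%E by apply: integral_ge0 => t _; rewrite lee_fin mulr_ge0 ?powR_ge0.
have JR0 : (0 <= JR)%E by apply: integral_ge0 => t _; rewrite lee_fin mulr_ge0 ?powR_ge0.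
have Gpos := Gamma_gt0 _ al0.
have cpos : 0 < c `^ al by apply: powR_gt0.
have key : ((Gamma al / c `^ al)%:E * ((Gamma al)^-1%:E * ((c `^ al)%:E * JL) +
    (Gamma al)^-1%:E * ((c `^ al)%:E * JR)) = JL + JR)%E.
  have Gi0 : 0 <= (Gamma al)^-1 * c `^ al by rewrite mulr_ge0 ?invr_ge0 ?powR_ge0 // ltW.
  rewrite !muleA -!EFinM ge0_muleDr; last 2 first.
  - by rewrite mule_ge0 // lee_fin.
  - by rewrite mule_ge0 // lee_fin.
  rewrite !muleA -!EFinM.
  have -> : Gamma al / c `^ al * ((Gamma al)^-1 * c `^ al) = 1.
    by field; apply/andP; split; exact: lt0r_neq0.
  by rewrite !mul1e.
rewrite key.
have JLR : (JL + JR = \int[lmu R]_(t in `]0%R, 1%R[)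
    (t `^ (al - 1) * (F (b - c * t) + F (c * t + a)))%R%:E)%E.
  rewrite -ge0_integralD //; last 4 first.
  - by move=> t _; rewrite lee_fin mulr_ge0 ?powR_ge0.
  - exact: measurable_funTS.
  - by move=> t _; rewrite lee_fin mulr_ge0 ?powR_ge0.
  - exact: measurable_funTS.
  by apply: eq_integral => t _; rewrite -EFinD mulrDr.
rewrite JLR.
have pts t : 0 < t < 1 -> a < b - c * t < b /\ a < c * t + a < b.
  by move=> /andP[t0 t1]; split; apply/andP; split; nra.
have IJ t : 0 < t < 1 -> J t by move=> ht; apply: sJ; rewrite /= in_itv.
split.
- have h0 : 0 < h 2^-1 by apply/hpos/IJ; apply/andP; split; lra.
  have fm0 : 0 <= f ((a + b) / 2) by apply: f0; apply: inI; apply/andP; split; lra.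
  set k := f ((a + b) / 2) / h 2^-1.
  have k0 : 0 <= k by rewrite /k divr_ge0 // ltW.
  have -> : ((al * h 2^-1)^-1 * f ((a + b) / 2))%:E =
      (k%:E * \int[lmu R]_(t in `]0%R, 1%R[) (t `^ (al - 1))%:E)%E.
    rewrite int_pow01 // -EFinM; congr EFin; rewrite /k.
    by field; apply/andP; split; exact: lt0r_neq0.
  rewrite -ge0_integralZl_EFin //; last 2 first.
  - by move=> t _; rewrite lee_fin powR_ge0.
  - by apply: measurable_funTS; apply: measurableT_comp.
  apply: ge0_le_integral => //.
  - by move=> t _; rewrite mule_ge0 ?lee_fin ?powR_ge0.
  - apply: measurable_funTS; apply: measurable_funeM; exact: measurableT_comp.
  - apply: measurable_funTS; apply: measurableT_comp => //; apply: measurable_funM => //.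
    apply: measurable_funD.
    + apply: measurableT_comp => //; apply: measurable_funB => //; exact: measurable_funM.
    + apply: measurableT_comp => //; apply: measurable_funD => //; exact: measurable_funM.
  - move=> t; rewrite /= in_itv /= => ht.
    have [/andP[p1 p2] /andP[q1 q2]] := pts t ht.
    rewrite -EFinM lee_fin !Fab ?p1 ?p2 ?q1 ?q2 //.
    have I1 : I (b - c * t) by apply: inI; rewrite (ltW p1) (ltW p2).
    have I2 : I (c * t + a) by apply: inI; rewrite (ltW q1) (ltW q2).
    have h12 : 0 < (2^-1 : R) < 1 by apply/andP; split; lra.
    have := hconv _ _ 2^-1 I1 I2 h12.
    have -> : 2^-1 * (b - c * t) + (1 - 2^-1) * (c * t + a) = (a + b) / 2 by field.
    have -> : 1 - 2^-1 = 2^-1 :> R by field.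
    move=> H.
    have kle : k <= f (b - c * t) + f (c * t + a).
      rewrite /k ler_pdivrMr //; nra.
    have pw : 0 <= t `^ (al - 1) := powR_ge0 _ _.
    nra.
- have fa0 : 0 <= f a by apply: f0.
  have fb0 : 0 <= f b by apply: f0.
  apply: le_scale_lower.
  - exact: measurable_itv.
  - apply: measurable_funTS; apply: measurableT_comp => //; apply: measurable_funM => //.
    apply: measurable_funD.
    + apply: measurableT_comp => //; apply: measurable_funB => //; exact: measurable_funM.
    + apply: measurableT_comp => //; apply: measurable_funD => //; exact: measurable_funM.
  - by rewrite addr_ge0.
  - by move=> t _; rewrite lee_fin mulr_ge0 ?powR_ge0 ?addr_ge0.
  - move=> t; rewrite /= in_itv /= => ht.
    have [/andP[p1 p2] /andP[q1 q2]] := pts t ht.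
    rewrite -EFinM lee_fin !Fab ?p1 ?p2 ?q1 ?q2 //.
    have t01 : 0 < 1 - t < 1 by move: ht => /andP[t0 t1]; apply/andP; split; lra.
    have H1 := hconv a b t Ia Ib ht.
    have H2 := hconv a b (1 - t) Ia Ib t01.
    rewrite (_ : 1 - (1 - t) = t) in H2; last by ring.
    rewrite (_ : t * a + (1 - t) * b = b - c * t) in H1; last by rewrite cE; ring.
    rewrite (_ : (1 - t) * a + t * b = c * t + a) in H2; last by rewrite cE; ring.
    have pw : 0 <= t `^ (al - 1) := powR_ge0 _ _.
    have ht0 : 0 < h t by apply/hpos/IJ.
    have ht1 : 0 < h (1 - t) by apply/hpos/IJ.
    have S : f (b - c * t) + f (c * t + a) <= (f a + f b) * (h t + h (1 - t)) by nra.
    nra.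
  - move=> t; rewrite /= in_itv /= => ht.
    have ht0 : 0 < h t by apply/hpos/IJ.
    have t01 : 0 < 1 - t < 1 by move: ht => /andP[t0 t1]; apply/andP; split; lra.
    have ht1 : 0 < h (1 - t) by apply/hpos/IJ.
    by rewrite lee_fin mulr_ge0 ?powR_ge0 // addr_ge0 // ltW.
Qed.
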